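(* Let $j,s,d,t$ be positive integers with $s>dt$, $q$ a prime power, $\mathcal{C}\subseteq\mathbb{F}_q^{js}$ a linear code of dimension $j(s-dt)$, and $\mathcal{L}:[js]\to[s]$ a labeling with $\Delta_{\mathcal{L}}(\mathcal{C})\ge dt+1$. Let $G\in\mathbb{F}_q^{j(s-dt)\times js}$ be any generator matrix of $\mathcal{C}$, and for $\Lambda\subseteq[s]$ let $G(\Lambda)$ be the submatrix of $G$ consisting of the columns $i\in[js]$ with $\mathcal{L}(i)\in\Lambda$. Then for every $\Lambda\subseteq[s]$ with $|\Lambda|=s-dt$, $G(\Lambda)$ is a square $j(s-dt)\times j(s-dt)$ matrix and $\det G(\Lambda)\neq0$.
   Context: A labeling is a surjection $\mathcal{L}:[n]\to[s]$. Labelweight: for $\mathbf{c}\in\mathbb{F}^n$, $\Delta_{\mathcal{L}}(\mathbf{c})=|\{\mathcal{L}(i): c_i\neq0\}|$; for a code $\mathcal{C}$, $\Delta_{\mathcal{L}}(\mathcal{C})=\min_{\mathbf{0}\ne\mathbf{c}\in\mathcal{C}}\Delta_{\mathcal{L}}(\mathbf{c})$. A generator matrix of $\mathcal{C}$ is a matrix whose row span is $\mathcal{C}$ and whose number of rows equals $\dim\mathcal{C}$. *)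

(* Defs.v *)
From HB Require Import structures.
From mathcomp Require Import all_boot all_order all_algebra all_field.
Set Implicit Arguments. Unset Strict Implicit. Unset Printing Implicit Defensive.
Import GRing.Theory.
Local Open Scope ring_scope.

Definition labeling (n s : nat) (L : 'I_n -> 'I_s) : Prop :=
  forall y : 'I_s, exists x : 'I_n, L x = y.

Definition labelweight (F : fieldType) (n s : nat) (L : 'I_n -> 'I_s)
  (c : 'rV[F]_n) : nat :=
  #|[set L i | i in [set i : 'I_n | c 0 i != 0]]|.

Definition labelcols (n s : nat) (L : 'I_n -> 'I_s) (Lam : {set 'I_s}) :
  {set 'I_n} := [set i : 'I_n | L i \in Lam].

Definition subcols (F : fieldType) (m n s : nat) (L : 'I_n -> 'I_s)
  (G : 'M[F]_(m, n)) (Lam : {set 'I_s}) : 'M[F]_(m, #|labelcols L Lam|) :=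
  colsub (fun k : 'I_#|labelcols L Lam| => enum_val k) G.

(* Main.v *)
Require Import Defs.
From HB Require Import structures.
From mathcomp Require Import all_boot all_order all_algebra all_field.
From mathcomp Require Import zify.
Import GRing.Theory.
Set Implicit Arguments. Unset Strict Implicit.
Local Open Scope ring_scope.

Lemma free_rows (F : fieldType) k n (G : 'M[F]_(k,n)) :
  free [seq row i G | i <- enum 'I_k] -> forall x : 'rV_k, x *m G = 0 -> x = 0.
Proof.
move=> fr x hx.
have frT : free [tuple row i G | i < k] by [].
apply/rowP => i; rewrite mxE.
move/freeP: frT => /(_ (fun i => x 0 i)) H; apply: H.
rewrite -[RHS]hx mulmx_sum_row; apply: eq_bigr => l _; by rewrite -tnth_nth tnth_mktuple.
Qed.

Lemma sum_upper (T : finType) (A : {set T}) (f : T -> nat) c :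
  (forall x, x \in A -> (f x <= c)%N) -> (c * #|A| <= \sum_(x in A) f x)%N ->
  forall x, x \in A -> f x = c.
Proof.
move=> hle hsum x xA; apply/eqP; rewrite eqn_leq hle //=; rewrite leqNgt; apply/negP => hlt.
have : (\sum_(y in A) f y < \sum_(y in A) c)%N.
  rewrite (bigD1 x) //= [X in (_ < X)%N](bigD1 x) //=.
  rewrite -addSn leq_add //. apply: leq_sum => y /andP[yA _]; exact: hle.
rewrite sum_nat_const; lia.
Qed.

Lemma sum_lower (T : finType) (A : {set T}) (f : T -> nat) c :
  (forall x, x \in A -> (c <= f x)%N) -> (\sum_(x in A) f x <= c * #|A|)%N ->
  forall x, x \in A -> f x = c.
Proof.
move=> hle hsum x xA; apply/eqP; rewrite eqn_leq hle //= andbT; rewrite leqNgt; apply/negP => hlt.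
have : (\sum_(y in A) c < \sum_(y in A) f y)%N.
  rewrite (bigD1 x) //= [X in (_ < X)%N](bigD1 x) //=.
  rewrite -addSn leq_add //. apply: leq_sum => y /andP[yA _]; exact: hle.
rewrite sum_nat_const; lia.
Qed.

Lemma colsE n s (L : 'I_n -> 'I_s) A :
  #|labelcols L A| = (\sum_(l in A) #|labelcols L [set l]|)%N.
Proof.
rewrite -sum1_card (partition_big L (mem A)) /=; last by move=> i; rewrite inE.
apply: eq_bigr => l lA; rewrite -sum1_card; apply: eq_bigl => i; rewrite !inE.
by case: eqP => [->|]; rewrite ?lA ?andbF ?andbT.
Qed.

Theorem mainTheorem5 (F : finFieldType) (j s d t : nat)
  (hj : (0 < j)%N) (hs : (0 < s)%N) (hd : (0 < d)%N) (ht : (0 < t)%N)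
  (hsdt : (d * t < s)%N)
  (C : {vspace 'rV[F]_(j * s)}) (hdimC : \dim C = (j * (s - d * t))%N)
  (L : 'I_(j * s) -> 'I_s) (hL : labeling L)
  (hLw : forall c : 'rV[F]_(j * s), c \in C -> c != 0 ->
           (d * t + 1 <= labelweight L c)%N)
  (G : 'M[F]_(j * (s - d * t), j * s))
  (hG : <<[seq row i G | i <- enum 'I_(j * (s - d * t))]>>%VS = C) :
  forall Lam : {set 'I_s}, #|Lam| = (s - d * t)%N ->
    exists e : #|labelcols L Lam| = (j * (s - d * t))%N,
      \det (castmx (erefl, e) (subcols L G Lam)) != 0.
Proof.
move=> Lam hLam.
have frG : free [seq row i G | i <- enum 'I_(j * (s - d * t))].
  by rewrite /free hG hdimC size_map size_enum_ord.
have inj : forall A : {set 'I_s}, #|A| = (s - d * t)%N ->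
    forall x : 'rV[F]_(j * (s - d * t)), x *m subcols L G A = 0 -> x = 0.
  move=> A hA x hx; apply: (free_rows frG).
  case: (eqVneq (x *m G) 0) => // c0; exfalso.
  have cC : x *m G \in C.
    rewrite -hG mulmx_sum_row; apply: rpred_sum => i _; apply: rpredZ.
    by apply: memv_span; apply: map_f; exact: mem_enum.
  have := hLw _ cC c0; apply/negP; rewrite -ltnNge addn1 ltnS.
  have hC : #|~: A| = (d * t)%N.
    have := cardsC A; rewrite card_ord hA; lia.
  rewrite /labelweight; apply: (leq_trans _ (eq_leq hC)); apply: subset_leq_card.
  apply/subsetP => l /imsetP[i]; rewrite inE => ci ->; rewrite inE; apply/negP => LiA.
  have iA : i \in labelcols L A by rewrite inE.
  move/eqP: ci; apply.
  move/rowP/(_ (enum_rank_in iA i)): hx.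
  rewrite /= !mxE /subcols.
  under eq_bigr do rewrite mxE.
  by rewrite enum_rankK_in.
have RF : forall A : {set 'I_s}, #|A| = (s - d * t)%N -> row_free (subcols L G A).
  move=> A hA; rewrite -kermx_eq0; apply/rowV0P => v /sub_kermxP; exact: inj A hA v.
have ge : forall A : {set 'I_s}, #|A| = (s - d * t)%N ->
    (j * (s - d * t) <= #|labelcols L A|)%N.
  move=> A hA; have := rank_leq_col (subcols L G A); by rewrite (eqP (RF A hA)).
pose n l := #|labelcols L [set l]|.
have tot : (\sum_(l in [set: 'I_s]) n l = j * s)%N.
  rewrite -colsE; have -> : labelcols L [set: 'I_s] = [set: 'I_(j * s)].
    by apply/setP => i; rewrite !inE.
  by rewrite cardsT card_ord.
case: (@arg_minnP _ Lam (fun A : {set 'I_s} => #|A| == (s - d * t)%N)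
        (fun A => #|labelcols L A|)); first by rewrite /= hLam.
move=> A0 /eqP hA0 hmin.
have swap : forall l l', l \in A0 -> l' \notin A0 -> (n l <= n l')%N.
  move=> l l' lA l'A.
  have := hmin (l' |: (A0 :\ l)).
  have hc : #|l' |: (A0 :\ l)| = (s - d * t)%N.
    rewrite cardsU1 in_setD1 (negbTE l'A) andbF /=.
    have := cardsD1 l A0; rewrite lA hA0 /=; lia.
  rewrite hc eqxx => /(_ isT).
  rewrite !colsE (bigD1 l) //= [X in (_ <= X)%N](bigD1 l') /=; last by rewrite !inE eqxx.
  have -> : (\sum_(i in l' |: A0 :\ l | i != l') n i = \sum_(i in A0 | i != l) n i)%N.
    apply: eq_bigl => x; rewrite !inE.
    case: (eqVneq x l') => [->|]; first by rewrite (negbTE l'A) andbF.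
    by rewrite /= andbT andbC.
  by rewrite leq_add2r.
have sA0 : (j * (s - d * t) <= \sum_(l in A0) n l)%N by rewrite -colsE; exact: ge.
have hCc : #|~: A0| = (d * t)%N by have := cardsC A0; rewrite card_ord hA0; lia.
have geC : forall l', l' \in ~: A0 -> (j <= n l')%N.
  move=> l'; rewrite inE => l'A.
  have : (\sum_(l in A0) n l <= \sum_(l in A0) n l')%N.
    by apply: leq_sum => l lA; exact: swap.
  rewrite sum_nat_const hA0 => h.
  have h2 : ((s - d * t) * j <= (s - d * t) * n l')%N by rewrite mulnC; exact: leq_trans sA0 h.
  by rewrite leq_pmul2l in h2; lia.
have split : (\sum_(l in [set: 'I_s]) n l = \sum_(l in A0) n l + \sum_(l in ~: A0) n l)%N.
  by rewrite (big_setID A0) setTI setTD.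
have eqC : forall l', l' \in ~: A0 -> n l' = j.
  apply: sum_lower => //; rewrite hCc.
  have hjs : (j * s = j * (s - d * t) + j * (d * t))%N by rewrite -mulnDr; congr (_ * _)%N; lia.
  lia.
have [l0 l0C] : exists l0, l0 \in ~: A0.
  by apply/set0Pn; rewrite -card_gt0 hCc muln_gt0 hd ht.
have eqA : forall l, l \in A0 -> n l = j.
  apply: sum_upper; last by rewrite hA0.
  move=> l lA; rewrite -(eqC l0 l0C); apply: swap => //; by move: l0C; rewrite inE.
have eqall : forall l, n l = j.
  by move=> l; case: (boolP (l \in A0)) => [/eqA|lA] //; apply: eqC; rewrite inE.
have e : #|labelcols L Lam| = (j * (s - d * t))%N.
  rewrite colsE (eq_bigr (fun _ => j)); last by move=> l _; exact: eqall.
  by rewrite sum_nat_const hLam mulnC.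
exists e.
move: (subcols L G Lam) (RF Lam hLam) e.
move: #|labelcols L Lam| => m M hM e; subst m.
by rewrite castmx_id -unitfE -unitmxE -row_free_unit.
Qed.
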